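(* Let $(X,Y,G)$ be random with $X\in\mathcal{X}$, $Y\in\{0,1\}$, $G\in\{a,b\}$, $\Pr[G=g]>0$ and $0<p_g<1$ for $g\in\{a,b\}$, where $p_g:=\Pr[Y=1\mid G=g]$, and $\Delta p:=p_a-p_b\neq0$. Let $k$ be a positive-definite kernel on $\mathcal{X}$ with RKHS $\mathcal{H}$ and feature map $\phi$ such that the class-conditional mean embeddings $\mu_{y,g}:=\mathbb{E}[\phi(X)\mid Y=y,G=g]$ exist, and set $\delta_y:=\mu_{y,a}-\mu_{y,b}$. Fix a subspace $V_m\subseteq\mathcal{H}$ with $\dim V_m\le m$ and suppose $P_{V_m}\delta_y=0$ for $y\in\{0,1\}$, where $P_{V_m}$ is the orthogonal projection onto $V_m$. Let $S=\langle w,\phi(X)\rangle_{\mathcal{H}}$ with $w\in\mathcal{H}$, $\|w\|_{\mathcal{H}}\le W$, $S\in[0,1]$ almost surely, and $\mathbb{E}[S\mid G=g]=p_g$ for $g\in\{a,b\}$. Then for every $t\in(0,1]$, \[\Pr\big[|S-Y|>t\big]\;\le\;\frac{W\rho_m}{|\Delta p|\,t},\qquad \rho_m:=\max_{h\in\{a,b\}}\big[p_h\|\delta_1\|_{\mathcal{H}}+(1-p_h)\|\delta_0\|_{\mathcal{H}}\big].\]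
   Context: The score $S$ is a linear function in the RKHS, i.e. $S=w(X)$ by the reproducing property. (The paper writes the maximum in $\rho_m$ as over $g$ of the expression with the opposite group $\bar g$, which ranges over both groups.) *)

(* Defs.v *)
From HB Require Import structures.
From mathcomp Require Import all_boot all_order all_algebra.
From mathcomp Require Import all_classical all_reals all_analysis.
Set Implicit Arguments. Unset Strict Implicit. Unset Printing Implicit Defensive.
Import Order.TTheory GRing.Theory Num.Theory.
Local Open Scope classical_set_scope.
Local Open Scope ring_scope.

Section Hilbert.
Variables (R : realType) (H : lmodType R).

Record inner_product (ip : H -> H -> R) : Prop := {
  ip_sym : forall u v, ip u v = ip v u;
  ip_linl : forall (a : R) u v z, ip (a *: u + v) z = a * ip u z + ip v z;
  ip_pos : forall u, u != 0 -> 0 < ip u u }.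

Definition hnorm (ip : H -> H -> R) (u : H) : R := Num.sqrt (ip u u).

Definition hcomplete (ip : H -> H -> R) : Prop :=
  forall u : nat -> H,
    (forall e : R, 0 < e -> exists N : nat, forall m n : nat,
        (N <= m)%N -> (N <= n)%N -> hnorm ip (u m - u n) < e) ->
    exists l : H, forall e : R, 0 < e -> exists N : nat, forall n : nat,
        (N <= n)%N -> hnorm ip (u n - l) < e.

Definition hilbert (ip : H -> H -> R) : Prop := inner_product ip /\ hcomplete ip.

Definition subspace_dim_le (V : set H) (m : nat) : Prop :=
  V 0 /\ (forall (a : R) u v, V u -> V v -> V (a *: u + v)) /\
  exists vs : 'I_m -> H,
    V = [set u | exists c : 'I_m -> R, u = \sum_(i < m) c i *: vs i].

(* p is the orthogonal projection of v onto V  (i.e. P_V v = p) *)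
Definition is_orth_proj (ip : H -> H -> R) (V : set H) (v p : H) : Prop :=
  V p /\ forall u, V u -> ip (v - p) u = 0.
End Hilbert.

(* positive-definite kernel (Gram matrices are positive semidefinite) *)
Definition pd_kernel (R : realType) (T : Type) (k : T -> T -> R) : Prop :=
  forall (n : nat) (c : 'I_n -> R) (xs : 'I_n -> T),
    0 <= \sum_(i < n) \sum_(j < n) c i * c j * k (xs i) (xs j).

(* H (with inner product ip) is the RKHS of k on T with feature map phi:
   ev identifies elements of H with functions on T (linearly, injectively),
   phi x = k(x, .) and the reproducing property holds. *)
Definition is_RKHS (R : realType) (T : Type) (H : lmodType R)
    (ip : H -> H -> R) (k : T -> T -> R) (ev : H -> T -> R) (phi : T -> H) : Prop :=
  [/\ hilbert ip,
      (forall (a : R) f g x, ev (a *: f + g) x = a * ev f x + ev g x),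
      (forall f, ev f = (fun _ => 0) -> f = 0),
      (forall x, ev (phi x) = k x) &
      (forall f x, ev f x = ip f (phi x))].

Definition cprob (R : realType) d (Om : measurableType d)
    (P : probability Om R) (A B : set Om) : R :=
  fine (P (A `&` B)) / fine (P B).

Definition cexp (R : realType) d (Om : measurableType d)
    (P : probability Om R) (f : Om -> R) (B : set Om) : R :=
  fine (\int[P]_(w in B) (f w)%:E) / fine (P B).

(* Main.v *)
Require Import Defs.
From HB Require Import structures.
From mathcomp Require Import all_boot all_order all_algebra.
From mathcomp Require Import all_classical all_reals all_analysis measurable_realfun.
From mathcomp Require Import ring lra.
Import Order.TTheory GRing.Theory Num.Theory.
Local Open Scope classical_set_scope.
Local Open Scope ring_scope.

Lemma ip0l (R : realType) (H : lmodType R) (ip : H -> H -> R) :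
  inner_product ip -> forall z, ip 0 z = 0.
Proof.
move=> [_ L _] z; have := L 1 0 0 z; rewrite scale1r addr0 mul1r => h.
lra.
Qed.

Lemma ipBr (R : realType) (H : lmodType R) (ip : H -> H -> R) :
  inner_product ip -> forall z u v, ip z (u - v) = ip z u - ip z v.
Proof.
move=> hip z u v; have [Sy L _] := hip.
rewrite Sy addrC -scaleN1r L Sy (Sy z v) (Sy z u); lra.
Qed.

Lemma CS (R : realType) (H : lmodType R) (ip : H -> H -> R) :
  inner_product ip -> forall u v, `|ip u v| <= hnorm ip u * hnorm ip v.
Proof.
move=> hip u v; have [Sy L Po] := hip.
have ge0 : forall z, 0 <= ip z z.
  move=> z; have [->|nz] := eqVneq z 0; first by rewrite ip0l.
  exact/ltW/Po.
have [->|nu] := eqVneq u 0; first by rewrite ip0l // normr0 /hnorm ip0l // sqrtr0 mul0r.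
have a0 := Po _ nu.
set a := ip u u; set b := ip u v; set c := ip v v.
have key : b ^+ 2 <= a * c.
  have := ge0 ((- (b / a)) *: u + v).
  rewrite L Sy L (Sy v u) -/a -/b -/c.
  rewrite Sy L -/a -/b.
  move=> h.
  have : 0 <= a * (- (b / a) * (- (b / a) * a + b) + (- (b / a) * b + c)) by rewrite mulr_ge0 // ltW.
  have e : a * (- (b / a) * (- (b / a) * a + b) + (- (b / a) * b + c)) = a * c - b ^+ 2.
    by field; rewrite gt_eqF.
  rewrite e; lra.
rewrite /hnorm -sqrtrM ?ge0 // -(sqrtr_sqr b); apply: ler_wsqrtr => //.
Qed.
Lemma cond_id (R : realFieldType) (p P1 P0 r1 r0 : R) :
  0 < P1 -> 0 < P0 -> p * (P1 + P0) = P1 -> r1 * P1 + r0 * P0 = P1 ->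
  p * r1 + (1 - p) * r0 = p.
Proof.
move=> h1 h0 hp hr.
have e : (p * r1 + (1 - p) * r0 - p) * (P1 + P0) = 0.
  have -> : (p * r1 + (1 - p) * r0 - p) * (P1 + P0) =
    r1 * (p * (P1 + P0)) + r0 * (P1 + P0) - r0 * (p * (P1 + P0)) - p * (P1 + P0) by ring.
  rewrite hp; lra.
move/eqP: e; rewrite mulf_eq0 => /orP[/eqP e|/eqP e]; lra.
Qed.

Arguments cond_id {R p P1 P0 r1 r0}.

Lemma key_bound (R : realFieldType) (pa pb ra1 ra0 rb1 rb0 W n1 n0 : R) :
  0 <= pa <= 1 -> 0 <= W -> 0 <= (1 - rb1) + rb0 ->
  pa * ra1 + (1 - pa) * ra0 = pa -> pb * rb1 + (1 - pb) * rb0 = pb ->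
  `|ra1 - rb1| <= W * n1 -> `|ra0 - rb0| <= W * n0 ->
  `|pa - pb| * ((1 - rb1) + rb0) <= W * (pa * n1 + (1 - pa) * n0).
Proof.
move=> /andP[pa0 pa1] W0 q0 Ia Ib h1 h0.
have e : (pa - pb) * ((1 - rb1) + rb0) = pa * (ra1 - rb1) + (1 - pa) * (ra0 - rb0).
  have : (pa - pb) * ((1 - rb1) + rb0) - (pa * (ra1 - rb1) + (1 - pa) * (ra0 - rb0))
     = (pb * rb1 + (1 - pb) * rb0 - pb) - (pa * ra1 + (1 - pa) * ra0 - pa) by ring.
  rewrite Ia Ib !subrr => h; apply/eqP; rewrite -subr_eq0 h //.
rewrite -(ger0_norm q0) -normrM e.
apply: (le_trans (ler_normD _ _)); rewrite !normrM (ger0_norm pa0).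
have pa1' : 0 <= 1 - pa by lra.
rewrite (ger0_norm pa1').
have := ler_wpM2l pa0 h1; have := ler_wpM2l pa1' h0; lra.
Qed.

Arguments key_bound {R pa pb ra1 ra0 rb1 rb0 W n1 n0}.

Lemma final_real (R : realFieldType) (pa pb P1a P0a P1b P0b ra1 ra0 rb1 rb0 W n1 n0 : R) :
  0 < P1a -> 0 < P0a -> 0 < P1b -> 0 < P0b ->
  pa * (P1a + P0a) = P1a -> pb * (P1b + P0b) = P1b ->
  ra1 * P1a + ra0 * P0a = P1a -> rb1 * P1b + rb0 * P0b = P1b ->
  0 <= P1a - ra1 * P1a -> 0 <= ra0 * P0a ->
  0 <= P1b - rb1 * P1b -> 0 <= rb0 * P0b ->
  (P1a + P0a) + (P1b + P0b) = 1 -> 0 <= W -> pa - pb != 0 ->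
  `|ra1 - rb1| <= W * n1 -> `|ra0 - rb0| <= W * n0 ->
  (P1a - ra1 * P1a + ra0 * P0a) + (P1b - rb1 * P1b + rb0 * P0b) <=
  W * Num.max (pa * n1 + (1 - pa) * n0) (pb * n1 + (1 - pb) * n0) / `|pa - pb|.
Proof.
move=> h1a h0a h1b h0b hpa hpb hra hrb e1a e0a e1b e0b hs W0 dp h1 h0.
have Ia := cond_id h1a h0a hpa hra.
have Ib := cond_id h1b h0b hpb hrb.
have ra1le : 0 <= 1 - ra1.
  by rewrite -(pmulr_rge0 _ h1a); have -> : P1a * (1 - ra1) = P1a - ra1 * P1a by ring.
have rb1le : 0 <= 1 - rb1.
  by rewrite -(pmulr_rge0 _ h1b); have -> : P1b * (1 - rb1) = P1b - rb1 * P1b by ring.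
have ra0ge : 0 <= ra0 by rewrite -(pmulr_rge0 _ h0a) mulrC.
have rb0ge : 0 <= rb0 by rewrite -(pmulr_rge0 _ h0b) mulrC.
have pa01 : 0 <= pa <= 1.
  have s0 : 0 < P1a + P0a by lra.
  apply/andP; split.
    by rewrite -(pmulr_rge0 _ s0) mulrC hpa ltW.
  by rewrite -(ler_pM2r s0) hpa mul1r; lra.
have pb01 : 0 <= pb <= 1.
  have s0 : 0 < P1b + P0b by lra.
  apply/andP; split.
    by rewrite -(pmulr_rge0 _ s0) mulrC hpb ltW.
  by rewrite -(ler_pM2r s0) hpb mul1r; lra.
set M := Num.max _ _.
have kb := key_bound pa01 W0 (addr_ge0 rb1le rb0ge) Ia Ib h1 h0.
have h1' : `|rb1 - ra1| <= W * n1 by rewrite distrC.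
have h0' : `|rb0 - ra0| <= W * n0 by rewrite distrC.
have ka := @key_bound _ pb pa rb1 rb0 ra1 ra0 W n1 n0 pb01 W0 (addr_ge0 ra1le ra0ge) Ib Ia h1' h0'.
rewrite distrC in ka.
have Ma : W * (pa * n1 + (1 - pa) * n0) <= W * M by rewrite ler_wpM2l // le_max lexx.
have Mb : W * (pb * n1 + (1 - pb) * n0) <= W * M by rewrite ler_wpM2l // le_max lexx orbT.
have dp0 : 0 < `|pa - pb| by rewrite normr_gt0.
rewrite ler_pdivlMr //.
set qa := (1 - ra1) + ra0; set qb := (1 - rb1) + rb0.
have Ea : P1a - ra1 * P1a + ra0 * P0a <= (P1a + P0a) * qa.
  have : 0 <= P1a * ra0 + P0a * (1 - ra1) by rewrite addr_ge0 // mulr_ge0 // ltW.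
  rewrite /qa; lra.
have Eb : P1b - rb1 * P1b + rb0 * P0b <= (P1b + P0b) * qb.
  have : 0 <= P1b * rb0 + P0b * (1 - rb1) by rewrite addr_ge0 // mulr_ge0 // ltW.
  rewrite /qb; lra.
have Pa0 : 0 <= P1a + P0a by lra.
have Pb0 : 0 <= P1b + P0b by lra.
have A1 := ler_wpM2l Pa0 (le_trans ka Mb).
have B1 := ler_wpM2l Pb0 (le_trans kb Ma).
have C1 := ler_wpM2r (ltW dp0) Ea.
have D1 := ler_wpM2r (ltW dp0) Eb.
have e1 : (P1a + P0a) * qa * `|pa - pb| = (P1a + P0a) * (`|pa - pb| * qa) by ring.
have e2 : (P1b + P0b) * qb * `|pa - pb| = (P1b + P0b) * (`|pa - pb| * qb) by ring.
rewrite e1 in C1; rewrite e2 in D1.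
have e3 : W * M = (P1a + P0a) * (W * M) + (P1b + P0b) * (W * M).
  by rewrite -mulrDl hs mul1r.
rewrite mulrDl e3; apply: lerD.
  exact: le_trans C1 A1.
exact: le_trans D1 B1.
Qed.
Lemma markov_block (R : realType) (d : measure_display) (Om : measurableType d)
  (P : probability Om R) (D : set Om) (S : Om -> R) (c t : R) :
  measurable D -> measurable_fun D S -> 0 < t ->
  measurable (D `&` [set x | (t < `|S x - c|)%R]) /\
  (t%:E * P (D `&` [set x | (t < `|S x - c|)%R]) <= \int[P]_(x in D) (`|S x - c|)%:E)%E.
Proof.
move=> mD mS t0.
have mh : measurable_fun D (fun x => `|S x - c|).
  apply: measurableT_comp => //; apply: measurable_funB => //.
have mA : measurable (D `&` [set x | (t < `|S x - c|)%R]).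
  have := mh mD _ (measurable_itv `]t, +oo[).
  by congr measurable; apply/seteqP; split => x [Dx] /=; rewrite ?in_itv /= ?andbT.
split => //.
have mg : measurable_fun D (fun x => ((S x - c)%:E : \bar R)).
  by apply/measurable_EFinP; apply: measurable_funB.
have := le_integral_abse P mD mg t0.
apply: le_trans.
apply: lee_wpmul2l; first by rewrite lee_fin ltW.
apply: le_measure; rewrite ?inE //.
  have := mh mD _ (measurable_itv `[t, +oo[).
  by congr measurable; apply/seteqP; split => x [Dx] /=; rewrite ?in_itv /= ?andbT ?lee_fin.
move=> x [Dx] /= h; split => //; rewrite lee_fin ltW //.
Qed.

Lemma abs_block1 (R : realType) (d : measure_display) (Om : measurableType d)
  (P : probability Om R) (D : set Om) (S : Om -> R) :
  measurable D -> P.-integrable D (EFin \o S) ->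
  {ae P, forall x, 0 <= S x <= 1} ->
  (\int[P]_(x in D) (`|S x - 1|)%:E = (fine (P D) - fine (\int[P]_(x in D) (S x)%:E))%:E)%E.
Proof.
move=> mD iS ae.
have mS : measurable_fun D S by move/integrableP: iS => [/measurable_EFinP].
rewrite (ae_eq_integral (fun x => (1 - S x)%:E)) //; last 3 first.
- apply/measurable_EFinP; apply: measurableT_comp => //; apply: measurable_funB => //.
- by apply/measurable_EFinP; apply: measurable_funB => //.
- by apply: filterS ae => x /andP[h0 h1] Dx; rewrite distrC ger0_norm // subr_ge0.
rewrite (integralB_EFin mD (finite_measure_integrable_cst P 1 mD) iS).
rewrite (integral_cst P mD 1) mul1e.
by rewrite EFinB !fineK ?fin_num_measure ?integrable_fin_num.
Qed.

Lemma abs_block0 (R : realType) (d : measure_display) (Om : measurableType d)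
  (P : probability Om R) (D : set Om) (S : Om -> R) :
  measurable D -> P.-integrable D (EFin \o S) ->
  {ae P, forall x, 0 <= S x <= 1} ->
  (\int[P]_(x in D) (`|S x - 0|)%:E = (fine (\int[P]_(x in D) (S x)%:E))%:E)%E.
Proof.
move=> mD iS ae.
have mS : measurable_fun D S by move/integrableP: iS => [/measurable_EFinP].
rewrite (ae_eq_integral (fun x => (S x)%:E)) //; last 3 first.
- apply/measurable_EFinP; apply: measurableT_comp => //; apply: measurable_funB => //.
- by apply/measurable_EFinP.
- by apply: filterS ae => x /andP[h0 h1] Dx; rewrite subr0 ger0_norm.
by rewrite fineK ?integrable_fin_num.
Qed.

Arguments markov_block {R d Om} P {D S} c {t}.
Arguments abs_block1 {R d Om} P {D S}.
Arguments abs_block0 {R d Om} P {D S}.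
Arguments CS {R H ip}.
Arguments ipBr {R H ip}.
Arguments final_real {R pa pb P1a P0a P1b P0b ra1 ra0 rb1 rb0 W n1 n0}.

(* G ω = true  encodes group a,  G ω = false  encodes group b. *)
Theorem theorem7 (R : realType) (d : measure_display) (Om : measurableType d)
  (P : probability Om R) (T : Type) (X : Om -> T) (Y G : Om -> bool)
  (H : lmodType R) (ip : H -> H -> R) (k : T -> T -> R)
  (ev : H -> T -> R) (phi : T -> H)
  (mu : bool -> bool -> H) (V : set H) (m : nat) (w : H) (W : R) :
  (forall b, measurable [set om | Y om = b]) ->
  (forall g, measurable [set om | G om = g]) ->
  (forall g, (0 < P [set om | G om = g])%E) ->
  let p g := cprob P [set om | Y om = true] [set om | G om = g] in
  (forall g, 0 < p g < 1) ->
  p true - p false != 0 ->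
  pd_kernel k ->
  is_RKHS ip k ev phi ->
  (* mu y g = E[phi(X) | Y = y, G = g] (mean embedding, characterized weakly) *)
  (forall y g f,
     P.-integrable [set om | Y om = y /\ G om = g] (fun om => (ip f (phi (X om)))%:E) /\
     ip f (mu y g) = cexp P (fun om => ip f (phi (X om))) [set om | Y om = y /\ G om = g]) ->
  let delta y := mu y true - mu y false in
  subspace_dim_le V m ->
  (forall y, is_orth_proj ip V (delta y) 0) ->
  let S om := ip w (phi (X om)) in
  hnorm ip w <= W ->
  {ae P, forall om, 0 <= S om <= 1} ->
  (forall g, cexp P S [set om | G om = g] = p g) ->
  let rho := Num.max
      (p true * hnorm ip (delta true) + (1 - p true) * hnorm ip (delta false))
      (p false * hnorm ip (delta true) + (1 - p false) * hnorm ip (delta false)) in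
  forall t : R, 0 < t <= 1 ->
    (P [set om | (t < `|S om - (Y om)%:R|)%R] <=
       (W * rho / (`|p true - p false| * t))%:E)%E.
Proof.
move=> mY mG PG0 p hp dp _ hR hmu delta _ _ S hW ae hS rho t /andP[t0 t1].
have hip : inner_product ip by case: hR => [[]].
pose D y g := [set om : Om | Y om = y /\ G om = g].
have mD : forall y g, measurable (D y g) by move=> y g; exact: (measurableI _ _ (mY y) (mG g)).
have iS : forall y g, P.-integrable (D y g) (EFin \o S) by move=> y g; case: (hmu y g w).
have mS : forall y g, measurable_fun (D y g) S.
  by move=> y g; move/integrableP: (iS y g) => [/measurable_EFinP].
have fP : forall A, measurable A -> P A = (fine (P A))%:E.
  by move=> A mA; rewrite fineK ?fin_num_measure.
pose Pr y g := fine (P (D y g)).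
pose I y g := fine (\int[P]_(x in D y g) (S x)%:E).
pose r y g := ip w (mu y g).
have rI : forall y g, r y g = I y g / Pr y g by move=> y g; case: (hmu y g w).
have GU : forall g, [set om | G om = g] = D true g `|` D false g.
  move=> g; apply/seteqP; split => x /=.
    by move=> Gx; case Ey: (Y x); [left|right].
  by case=> -[].
have Dd : forall g, D true g `&` D false g = set0.
  by move=> g; apply/seteqP; split => x // [[Yt _] [Yf _]]; rewrite Yt in Yf.
have PGsum : forall g, fine (P [set om | G om = g]) = Pr true g + Pr false g.
  by move=> g; rewrite GU measureU ?Dd // fineD ?fin_num_measure.
have PG : forall g, 0 < fine (P [set om | G om = g]).
  move=> g; apply: fine_gt0; apply/andP; split; first exact: PG0.
  by rewrite (fP _ (mG g)) ltry.
have pE : forall g, p g = Pr true g / (Pr true g + Pr false g).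
  by move=> g; rewrite /p /cprob -PGsum.
have Pr0 : forall y g, 0 <= Pr y g by move=> y g; apply: fine_ge0; apply: measure_ge0.
have Pr1pos : forall g, 0 < Pr true g.
  move=> g; have := hp g; rewrite pE => /andP[h _].
  rewrite lt_neqAle Pr0 andbT; apply/eqP => e; move: h; rewrite -e mul0r ltxx.
  by [].
have Pr0pos : forall g, 0 < Pr false g.
  move=> g; have := hp g; rewrite pE => /andP[_ h]; have s := PG g; rewrite PGsum in s.
  by rewrite ltr_pdivrMr // mul1r in h; lra.
have hpa : forall g, p g * (Pr true g + Pr false g) = Pr true g.
  by move=> g; rewrite pE divfK // gt_eqF // -PGsum.
have hI : forall g, I true g + I false g = Pr true g.
  move=> g; have := hS g; rewrite /cexp PGsum GU integral_setU //; last 2 first.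
  - by apply/measurable_funU => //; split; apply/measurable_EFinP.
  - exact/disj_set2P.
  rewrite fineD ?integrable_fin_num // => h.
  by rewrite -(hpa g) -h divfK // gt_eqF // -PGsum.
have ri : forall y g, r y g * Pr y g = I y g.
  by move=> [] g; rewrite rI divfK // gt_eqF.
have hr : forall g, r true g * Pr true g + r false g * Pr false g = Pr true g.
  by move=> g; rewrite !ri hI.
pose B y g := D y g `&` [set x | (t < `|S x - (y : nat)%:R|)%R].
have mk : forall y g, measurable (B y g) /\
    (t%:E * P (B y g) <= \int[P]_(x in D y g) (`|S x - (y : nat)%:R|)%:E)%E.
  by move=> y g; exact: (markov_block P ((y : nat)%:R) (mD y g) (mS y g) t0).
pose E y g := if y then Pr true g - I true g else I false g.
have bnd : forall y g, t * fine (P (B y g)) <= E y g.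
  move=> y g; case: (mk y g) => mB h; rewrite (fP _ mB) -EFinM in h.
  clear mB; case: y h => h.
    by rewrite (abs_block1 P (mD true g) (iS true g) ae) lee_fin in h.
  by rewrite (abs_block0 P (mD false g) (iS false g) ae) lee_fin in h.
have Aeq : [set om | (t < `|S om - (Y om)%:R|)%R] =
    (B true true `|` B false true) `|` (B true false `|` B false false).
  apply/seteqP; split => x /=.
    move=> hx; case Ey: (Y x) hx; case Eg: (G x) => hx.
    - by left; left; split.
    - by right; left; split.
    - by left; right; split.
    - by right; right; split.
  by case=> -[] [[-> _] h].
have mB : forall y g, measurable (B y g) by move=> y g; case: (mk y g).
have le1 : (P [set om | (t < `|S om - (Y om)%:R|)%R] <=
    ((fine (P (B true true)) + fine (P (B false true))) +
     (fine (P (B true false)) + fine (P (B false false))))%:E)%E.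
  rewrite Aeq !EFinD -!fP //.
  apply: le_trans (measureU2 _ _ _) _; try by apply: measurableU.
  by apply: leeD; apply: measureU2.
have W0 : 0 <= W by apply: le_trans hW; exact: sqrtr_ge0.
have hs : (Pr true true + Pr false true) + (Pr true false + Pr false false) = 1.
  rewrite -!PGsum.
  have eT : [set: Om] = [set om | G om = true] `|` [set om | G om = false].
    by apply/seteqP; split => x //= _; case: (G x); [left|right].
  have h := probability_setT P; rewrite eT measureU // in h; last first.
    by apply/seteqP; split => x // [/= Gt /= Gf]; rewrite Gt in Gf.
  by rewrite -fineD ?fin_num_measure // h.
have nb : forall y, `|r y true - r y false| <= W * hnorm ip (delta y).
  move=> y; rewrite /r -ipBr //.
  apply: le_trans (CS hip w (delta y)) _.
  by apply: ler_wpM2r => //; exact: sqrtr_ge0.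
have e1 : forall g, 0 <= Pr true g - r true g * Pr true g.
  move=> g; rewrite ri; have := bnd true g; have : 0 <= t * fine (P (B true g)).
    by apply: mulr_ge0; [exact: ltW | apply: fine_ge0; exact: measure_ge0].
  rewrite /E /=; lra.
have e0 : forall g, 0 <= r false g * Pr false g.
  move=> g; rewrite ri; have := bnd false g; have : 0 <= t * fine (P (B false g)).
    by apply: mulr_ge0; [exact: ltW | apply: fine_ge0; exact: measure_ge0].
  rewrite /E /=; lra.
have F := final_real (Pr1pos true) (Pr0pos true) (Pr1pos false) (Pr0pos false)
  (hpa true) (hpa false) (hr true) (hr false) (e1 true) (e0 true) (e1 false) (e0 false)
  hs W0 dp (nb true) (nb false).
apply: le_trans le1 _; rewrite lee_fin invfM mulrA ler_pdivlMr //.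
apply: le_trans _ F.
rewrite !ri.
have := bnd true true; have := bnd false true; have := bnd true false; have := bnd false false.
rewrite /E /=; lra.
Qed.
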